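(* Let $\arctan$ denote the principal branch of the inverse tangent on $\mathbb{C}\setminus\big((-i\infty,-i]\cup[i,i\infty)\big)$ with $\arctan 0=0$. For every $n\in\mathbb{N}$ and every $z$ in this domain with $z\neq0$, \[ (\arctan z)^{(n)}=\frac{(n-1)!}{(2z)^{n-1}}\sum_{k=0}^{n-1}(-1)^k\binom{k}{n-k-1}\frac{(2z)^{2k}}{(1+z^2)^{k+1}}. \] Moreover, \[ \frac{\arctan z}{z}=\sum_{n=0}^{\infty}(-1)^n\Big[\frac{\pi}{4}+T(n)\Big](z-1)^n,\qquad |z-1|<\sqrt2, \] where $T(0)=0$ and $T(n)=\sum_{k=1}^{n}\frac{(-1)^k}{2^{k/2}k}\sin\frac{3k\pi}{4}$ for $n\ge1$.
   Context: Ordinary binomial coefficients, with $\binom{k}{j}=0$ if $j>k$. *)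

(* Defs.v *)
From Stdlib Require Import Reals.
From Coquelicot Require Import Coquelicot.
Open Scope R_scope.

(* ordinary binomial coefficient on nat, with binom k j = 0 when j > k *)
Fixpoint binom (n k : nat) : nat :=
  match n, k with
  | _, O => 1%nat
  | O, S _ => 0%nat
  | S n', S k' => (binom n' k' + binom n' k)%nat
  end.

(* principal argument in (-PI, PI] (arbitrary value 0-ish at z = 0) *)
Definition Carg (z : C) : R :=
  if Rle_dec 0 (Im z) then acos (Re z / Cmod z) else - acos (Re z / Cmod z).

Definition Clog (z : C) : C := (ln (Cmod z), Carg z).

Definition Catan (z : C) : C :=
  (Ci / 2 * (Clog (1 - Ci * z) - Clog (1 + Ci * z)))%C.

Definition atan_dom (z : C) : Prop := ~ (Re z = 0 /\ 1 <= Rabs (Im z)).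

Definition is_nth_cderive (D : C -> Prop) (f : C -> C) (n : nat) (z v : C) : Prop :=
  exists g : nat -> C -> C,
    (forall w, D w -> g O w = f w) /\
    (forall k w, D w -> is_derive (g k) w (g (S k) w)) /\
    g n z = v.

Fixpoint T (n : nat) : R :=
  match n with
  | O => 0
  | S m => T m + (-1) ^ (S m) / (Rpower 2 (INR (S m) / 2) * INR (S m))
                 * sin (3 * INR (S m) * PI / 4)
  end.

(* arctan z / z, extended by continuity (value 1) at the removable point 0 *)
Definition atan_over (z : C) : C := if Ceq_dec z 0 then 1%C else (Catan z / z)%C.

(* Main.v *)
Require Import Defs.
From Stdlib Require Import Reals Lra Lia.
From Coquelicot Require Import Coquelicot.
Open Scope R_scope.

Lemma Ci2 : Cpow Ci 2 = (- (1))%C. Proof. apply injective_projections; simpl; ring. Qed.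

Lemma Cmod_sub_sym (a b : C) : Cmod (a - b) = Cmod (b - a).
Proof. replace (a - b)%C with (- (b - a))%C by ring. apply Cmod_opp. Qed.

Lemma is_derive_C (f : C -> C) (x l : C) :
  (forall eps : R, 0 < eps -> exists delta : R, 0 < delta /\
     forall y : C, Cmod (y - x) < delta ->
       Cmod (f y - f x - (y - x) * l) <= eps * Cmod (y - x)) ->
  @is_derive C_AbsRing C_NormedModule f x l.
Proof.
  intros H. split.
  - apply is_linear_scal_l.
  - intros x' Hx'. 
    apply (@is_filter_lim_locally_unique C_AbsRing (AbsRing_NormedModule C_AbsRing)) in Hx'. subst x'.
    intros eps. destruct (H eps (cond_pos eps)) as [d [Hd Hy]].
    exists (mkposreal d Hd). intros y Hb. 
    specialize (Hy y Hb).
    exact Hy.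
Qed.

Lemma is_derive_C_inv (f : C -> C) (x l : C) :
  @is_derive C_AbsRing C_NormedModule f x l ->
  (forall eps : R, 0 < eps -> exists delta : R, 0 < delta /\
     forall y : C, Cmod (y - x) < delta ->
       Cmod (f y - f x - (y - x) * l) <= eps * Cmod (y - x)).
Proof.
  intros [_ H] eps Heps.
  assert (Hl : is_filter_lim (locally (T:=AbsRing_UniformSpace C_AbsRing) x) x) by (intros P HP; exact HP).
  destruct (H x Hl (mkposreal eps Heps)) as [[d Hd] Hy].
  exists d. split; [exact Hd|]. intros y Hy'. exact (Hy y Hy').
Qed.

Notation dC := (@is_derive C_AbsRing C_NormedModule).

Lemma dC_ext_val (f : C -> C) (x l l' : C) : dC f x l -> l = l' -> dC f x l'.
Proof. intros H ->. exact H. Qed.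

Lemma dC_ext (f g : C -> C) (x l : C) : (forall y, f y = g y) -> dC f x l -> dC g x l.
Proof. intros H Hd. apply is_derive_ext with f; auto. Qed.

Lemma dC_const (c x : C) : dC (fun _ => c) x (RtoC 0).
Proof. apply (is_derive_const (K:=C_AbsRing) (V:=C_NormedModule)). Qed.

Lemma dC_id (x : C) : dC (fun y => y) x (RtoC 1).
Proof. apply is_derive_C. intros eps He. exists 1. split; [lra|]. intros y _.
  replace (y - x - (y - x) * 1)%C with (RtoC 0) by ring. rewrite Cmod_0.
  apply Rmult_le_pos; [lra| apply Cmod_ge_0]. Qed.

Lemma dC_plus (f g : C -> C) (x df dg : C) : dC f x df -> dC g x dg -> dC (fun y => f y + g y)%C x (df + dg)%C.
Proof. intros Hf Hg. exact (is_derive_plus f g x df dg Hf Hg). Qed.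

Lemma dC_opp (f : C -> C) (x df : C) : dC f x df -> dC (fun y => - f y)%C x (- df)%C.
Proof. intros Hf. exact (is_derive_opp f x df Hf). Qed.

Lemma dC_minus (f g : C -> C) (x df dg : C) : dC f x df -> dC g x dg -> dC (fun y => f y - g y)%C x (df - dg)%C.
Proof. intros Hf Hg. exact (is_derive_minus f g x df dg Hf Hg). Qed.

Lemma dK_of_dC f x l : dC f x l -> @is_derive C_AbsRing (AbsRing_NormedModule C_AbsRing) f x l.
Proof. intros [_ H]. split. apply is_linear_scal_l. intros x0 Hx0. exact (H x0 Hx0). Qed.
Lemma dC_of_dK f x l : @is_derive C_AbsRing (AbsRing_NormedModule C_AbsRing) f x l -> dC f x l.
Proof. intros [_ H]. split. apply is_linear_scal_l. intros x0 Hx0. exact (H x0 Hx0). Qed.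

Lemma dC_mult (f g : C -> C) (x df dg : C) : dC f x df -> dC g x dg -> dC (fun y => f y * g y)%C x (df * g x + f x * dg)%C.
Proof. intros Hf Hg. 
  apply dC_of_dK. exact (is_derive_mult (K:=C_AbsRing) f g x df dg (dK_of_dC _ _ _ Hf) (dK_of_dC _ _ _ Hg) Cmult_comm). Qed.

Lemma dC_scal (c : C) (f : C -> C) (x df : C) : dC f x df -> dC (fun y => c * f y)%C x (c * df)%C.
Proof. intros Hf. eapply dC_ext_val. apply dC_mult. apply dC_const. exact Hf. apply injective_projections; simpl; ring. Qed.

Lemma dC_comp (f g : C -> C) (x df dg : C) : dC f (g x) df -> dC g x dg -> dC (fun y => f (g y)) x (dg * df)%C.
Proof. intros Hf Hg. exact (is_derive_comp f g x df dg Hf (dK_of_dC _ _ _ Hg)). Qed.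

Lemma dC_pow (f : C -> C) (x df : C) n : dC f x df -> dC (fun y => Cpow (f y) (S n)) x (INR (S n) * df * Cpow (f x) n)%C.
Proof.
  intros Hf. induction n as [|n IH].
  - eapply dC_ext_val. eapply dC_ext with (f:=f). intros y; simpl; ring. exact Hf.
    simpl. apply injective_projections; simpl; ring.
  - eapply dC_ext_val. 
    + eapply dC_ext with (f := fun y => (f y * Cpow (f y) (S n))%C). intros y; reflexivity.
      apply dC_mult. exact Hf. exact IH.
    + rewrite !S_INR. simpl. 
      apply injective_projections; simpl; ring.
Qed.

Lemma Cmod_rev (x y : C) : Cmod x - Cmod (y - x) <= Cmod y.
Proof.
  assert (H := Cmod_triangle y (x - y)). replace (y + (x - y))%C with x in H by ring.
  rewrite Cmod_sub_sym in H. lra.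
Qed.

Lemma dC_Cinv (x : C) : x <> 0%C -> dC (fun y => / y)%C x (- / (x * x))%C.
Proof.
  intros Hx. apply is_derive_C. intros eps He.
  assert (Hm : 0 < Cmod x) by (apply Cmod_gt_0; auto).
  exists (Rmin (Cmod x / 2) (eps * (Cmod x * Cmod x * Cmod x) / 2)). split.
  { apply Rmin_glb_lt. lra. apply Rmult_lt_0_compat; [|lra]. repeat apply Rmult_lt_0_compat; auto. }
  intros y Hy.
  assert (H1 := Rmin_l (Cmod x / 2) (eps * (Cmod x * Cmod x * Cmod x) / 2)).
  assert (H2 := Rmin_r (Cmod x / 2) (eps * (Cmod x * Cmod x * Cmod x) / 2)).
  assert (Hyx := Cmod_rev x y).
  assert (Hmy : Cmod x / 2 < Cmod y) by lra.
  assert (Hy0 : y <> 0%C). { intros ->. rewrite Cmod_0 in Hmy. lra. }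
  replace (/ y - / x - (y - x) * - / (x * x))%C with ((y - x) * (y - x) / (x * x * y))%C
    by (field; auto).
  rewrite Cmod_div by (repeat apply Cmult_neq_0; auto).
  rewrite !Cmod_mult.
  set (d := Cmod (y - x)) in *. assert (0 <= d) by apply Cmod_ge_0.
  apply Rle_trans with (d * d / (Cmod x * Cmod x * (Cmod x / 2))).
  { apply Rmult_le_compat_l. apply Rmult_le_pos; auto.
    apply Rinv_le_contravar. repeat apply Rmult_lt_0_compat; lra.
    apply Rmult_le_compat_l. apply Rmult_le_pos; lra. lra. }
  apply Rle_trans with (d * (eps * (Cmod x * Cmod x * Cmod x) / 2) / (Cmod x * Cmod x * (Cmod x / 2))).
  { unfold Rdiv. apply Rmult_le_compat_r.
    left. apply Rinv_0_lt_compat. repeat apply Rmult_lt_0_compat; lra.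
    apply Rmult_le_compat_l; lra. }
  right. field. lra.
Qed.

Definition Cex (d : C) : C := (exp (fst d) * cos (snd d), exp (fst d) * sin (snd d)).

Lemma Cex_add (a b : C) : Cex (a + b)%C = (Cex a * Cex b)%C.
Proof.
  destruct a as [a1 a2]; destruct b as [b1 b2]. unfold Cex; simpl.
  rewrite exp_plus, cos_plus, sin_plus.
  apply injective_projections; simpl; ring.
Qed.

Lemma Cmod_pair_le (u v : R) : Cmod (u, v) <= Rabs u + Rabs v.
Proof.
  replace (u, v) with (RtoC u + RtoC v * Ci)%C
    by (apply injective_projections; simpl; ring).
  eapply Rle_trans. apply Cmod_triangle.
  rewrite Cmod_mult, Cmod_Ci, !Cmod_R. lra.
Qed.

Lemma Re_le_Cmod (d : C) : Rabs (fst d) <= Cmod d.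
Proof. apply re_le_Cmod. Qed.

Lemma Im_le_Cmod (d : C) : Rabs (snd d) <= Cmod d.
Proof. eapply Rle_trans; [|apply Rmax_Cmod]. apply Rmax_r. Qed.

Lemma dpl_eps (f : R -> R) (x l : R) : derivable_pt_lim f x l ->
  forall eps, 0 < eps -> exists delta, 0 < delta /\ forall h, Rabs h < delta ->
    Rabs (f (x + h) - f x - l * h) <= eps * Rabs h.
Proof.
  intros H eps He. destruct (H eps He) as [[d Hd] Hh].
  exists d. split; auto. intros h Hlt.
  destruct (Req_dec h 0) as [->|Hn].
  { rewrite Rplus_0_r. replace (f x - f x - l * 0) with 0 by ring. rewrite Rabs_R0. lra. }
  specialize (Hh h Hn Hlt). simpl in Hh.
  replace (f (x + h) - f x - l * h) with (((f (x + h) - f x) / h - l) * h) by (field; auto).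
  rewrite Rabs_mult. apply Rmult_le_compat_r. apply Rabs_pos. lra.
Qed.

Lemma Cex_o : forall eps, 0 < eps -> exists delta, 0 < delta /\ forall d : C,
  Cmod d < delta -> Cmod (Cex d - 1 - d)%C <= eps * Cmod d.
Proof.
  intros eps He. set (e1 := Rmin (eps / 10) 1).
  assert (He1 : 0 < e1) by (unfold e1; apply Rmin_glb_lt; lra).
  assert (He1a : e1 <= eps / 10) by apply Rmin_l.
  assert (He1b : e1 <= 1) by apply Rmin_r.
  clearbody e1.
  destruct (dpl_eps exp 0 (exp 0) (derivable_pt_lim_exp 0) e1 He1) as [d1 [Hd1 H1]].
  destruct (dpl_eps cos 0 (- sin 0) (derivable_pt_lim_cos 0) e1 He1) as [d2 [Hd2 H2]].
  destruct (dpl_eps sin 0 (cos 0) (derivable_pt_lim_sin 0) e1 He1) as [d3 [Hd3 H3]].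
  rewrite exp_0 in H1. rewrite sin_0, cos_0 in *. rewrite Ropp_0 in H2.
  exists (Rmin (Rmin 1 e1) (Rmin d1 (Rmin d2 d3))). split.
  { repeat apply Rmin_glb_lt; lra. }
  intros [a b] Hd.
  assert (Ha := Re_le_Cmod (a, b)). assert (Hb := Im_le_Cmod (a, b)). simpl in Ha, Hb.
  set (c := Cmod (a, b)) in *.
  assert (Hm1 := Rmin_l (Rmin 1 e1) (Rmin d1 (Rmin d2 d3))).
  assert (Hm2 := Rmin_r (Rmin 1 e1) (Rmin d1 (Rmin d2 d3))).
  assert (Hm11 := Rmin_l 1 e1). assert (Hm12 := Rmin_r 1 e1).
  assert (Hm21 := Rmin_l d1 (Rmin d2 d3)). assert (Hm22 := Rmin_r d1 (Rmin d2 d3)).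
  assert (Hm221 := Rmin_l d2 d3). assert (Hm222 := Rmin_r d2 d3).
  specialize (H1 a ltac:(lra)). specialize (H2 b ltac:(lra)). specialize (H3 b ltac:(lra)).
  rewrite !Rplus_0_l in H1, H2, H3.
  assert (Hea : exp a <= 3).
  { eapply Rle_trans; [|apply exp_le_3]. apply Rabs_le_between in Ha. destruct (Req_dec a 1) as [->|]; [lra|]. left; apply exp_increasing; lra. }
  assert (Hea0 : 0 < exp a) by apply exp_pos.
  assert (E : (((exp a * cos b)%R, (exp a * sin b)%R) - 1 - (a,b))%C = (exp a * cos b - 1 - a, exp a * sin b - b))
    by (apply injective_projections; simpl; ring).
  unfold Cex; simpl fst; simpl snd; rewrite E.
  eapply Rle_trans. apply Cmod_pair_le.
  assert (R1 : Rabs (exp a * cos b - 1 - a) <= 4 * e1 * c).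
  { replace (exp a * cos b - 1 - a) with ((exp a - 1 - 1 * a) + exp a * (cos b - 1 - 0 * b)) by ring.
    eapply Rle_trans. apply Rabs_triang. rewrite Rabs_mult, (Rabs_right (exp a)) by lra.
    assert (exp a * Rabs (cos b - 1 - 0 * b) <= 3 * (e1 * Rabs b)).
    { apply Rmult_le_compat; try lra; apply Rabs_pos. }
    assert (e1 * Rabs a <= e1 * c) by (apply Rmult_le_compat_l; lra).
    assert (e1 * Rabs b <= e1 * c) by (apply Rmult_le_compat_l; lra).
    lra. }
  assert (R2 : Rabs (exp a * sin b - b) <= 5 * e1 * c).
  { replace (exp a * sin b - b) with ((exp a - 1 - 1 * a) * sin b + a * sin b + (sin b - 0 - 1 * b)) by ring.
    eapply Rle_trans. apply Rabs_triang. eapply Rle_trans. apply Rplus_le_compat_r. apply Rabs_triang.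
    rewrite !Rabs_mult.
    assert (Hsb : Rabs (sin b) <= 2 * Rabs b).
    { replace (sin b) with ((sin b - 0 - 1 * b) + b) by ring.
      eapply Rle_trans. apply Rabs_triang. assert (e1 * Rabs b <= Rabs b).
      { rewrite <- (Rmult_1_l (Rabs b)) at 2. apply Rmult_le_compat_r. apply Rabs_pos. lra. }
      lra. }
    assert (X1 : Rabs (exp a - 1 - 1 * a) * Rabs (sin b) <= (e1 * Rabs a) * (2 * Rabs b)).
    { apply Rmult_le_compat; try apply Rabs_pos; lra. }
    assert (X2 : Rabs a * Rabs (sin b) <= e1 * (2 * Rabs b)).
    { apply Rmult_le_compat; try apply Rabs_pos; lra. }
    assert (X3 : e1 * Rabs a * (2 * Rabs b) <= e1 * 1 * (2 * c)).
    { apply Rmult_le_compat; try lra. apply Rmult_le_pos; [lra|apply Rabs_pos].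
      apply Rmult_le_pos; [lra|apply Rabs_pos]. apply Rmult_le_compat_l; lra. }
    assert (e1 * (2 * Rabs b) <= e1 * (2 * c)) by (apply Rmult_le_compat_l; lra).
    assert (e1 * Rabs b <= e1 * c) by (apply Rmult_le_compat_l; lra).
    lra. }
  assert (e1 * c <= eps / 10 * c) by (apply Rmult_le_compat_r; [apply Cmod_ge_0|lra]).
  assert (0 <= c) by apply Cmod_ge_0. assert (0 <= eps * c) by (apply Rmult_le_pos; lra). lra.
Qed.

Lemma Cmod_sq (x y : R) : Cmod (x, y) * Cmod (x, y) = x * x + y * y.
Proof. unfold Cmod; simpl. rewrite sqrt_sqrt; [ring|]. nra. Qed.

Lemma Cex_Clog (w : C) : w <> 0%C -> Cex (Clog w) = w.
Proof.
  intros Hw. assert (Hr : 0 < Cmod w) by (apply Cmod_gt_0; auto).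
  destruct w as [x y]. set (r := Cmod (x, y)) in *.
  assert (Hsq : r * r = x * x + y * y) by apply Cmod_sq.
  assert (Hx : Rabs x <= r) by (exact (Re_le_Cmod (x, y))).
  assert (Hu : -1 <= x / r <= 1).
  { apply Rabs_le_between. unfold Rdiv. rewrite Rabs_mult, Rabs_inv, (Rabs_right r) by lra.
    apply (Rmult_le_reg_r r); [lra|]. rewrite Rmult_assoc, Rinv_l by lra. lra. }
  assert (Hs : sqrt (1 - (x / r)²) = Rabs y / r).
  { replace (1 - (x / r)²) with ((y / r)²).
    2:{ unfold Rsqr. replace (y / r * (y / r)) with (y * y / (r * r)) by (field; lra).
        replace (x / r * (x / r)) with (x * x / (r * r)) by (field; lra).
        replace (y * y) with (r * r - x * x) by lra. field. lra. }
    rewrite sqrt_Rsqr_abs. unfold Rdiv. rewrite Rabs_mult, Rabs_inv, (Rabs_right r) by lra. reflexivity. }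
  unfold Cex, Clog, Carg; simpl. fold r. rewrite exp_ln by lra.
  destruct (Rle_dec 0 y) as [Hy|Hy].
  - rewrite cos_acos, sin_acos, Hs by auto. rewrite Rabs_right by lra.
    apply injective_projections; simpl; field; lra.
  - rewrite cos_neg, sin_neg, cos_acos, sin_acos, Hs by auto. rewrite Rabs_left by lra.
    apply injective_projections; simpl; field; lra.
Qed.

Lemma Cmod_fact1 (x y : R) : x <> 0 -> Cmod (x, y) = Rabs x * sqrt (1 + (y / x)²).
Proof.
  intros Hx. unfold Cmod; simpl.
  replace (x * (x * 1) + y * (y * 1)) with (x² * (1 + (y / x)²)) by (unfold Rsqr; field; auto).
  rewrite sqrt_mult by (try apply Rle_0_sqr; pose proof (Rle_0_sqr (y/x)); lra).
  rewrite sqrt_Rsqr_abs. reflexivity.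
Qed.

Lemma Cmod_fact2 (x y : R) : y <> 0 -> Cmod (x, y) = Rabs y * sqrt (1 + (x / y)²).
Proof.
  intros Hy. unfold Cmod; simpl.
  replace (x * (x * 1) + y * (y * 1)) with (y² * (1 + (x / y)²)) by (unfold Rsqr; field; auto).
  rewrite sqrt_mult by (try apply Rle_0_sqr; pose proof (Rle_0_sqr (x/y)); lra).
  rewrite sqrt_Rsqr_abs. reflexivity.
Qed.

Lemma sqrt1p_pos (t : R) : 0 < sqrt (1 + t²).
Proof. apply sqrt_lt_R0. pose proof (Rle_0_sqr t). lra. Qed.

Lemma atan_nonneg (t : R) : 0 <= t -> 0 <= atan t.
Proof. intros H. destruct (Req_dec t 0) as [->|Hn]. rewrite atan_0; lra.
  left. rewrite <- atan_0. apply atan_increasing. lra. Qed.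

Lemma atan_neg (t : R) : t < 0 -> atan t < 0.
Proof. intros H. rewrite <- atan_0. apply atan_increasing. lra. Qed.

Lemma Carg_chart1 (x y : R) : 0 < x -> Carg (x, y) = atan (y / x).
Proof.
  intros Hx. assert (Hc : x / Cmod (x, y) = cos (atan (y / x))).
  { rewrite cos_atan, Cmod_fact1, Rabs_right by lra. field. split; [|lra].
    pose proof (sqrt1p_pos (y/x)). lra. }
  pose proof (atan_bound (y / x)) as Hb. pose proof PI_RGT_0.
  unfold Carg; simpl. destruct (Rle_dec 0 y) as [Hy|Hy].
  - rewrite Hc. apply acos_cos. split.
    apply atan_nonneg. apply Rmult_le_pos; [lra|]. left; apply Rinv_0_lt_compat; lra. lra.
  - rewrite Hc. rewrite <- cos_neg. rewrite acos_cos. ring.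
    assert (atan (y/x) < 0). { apply atan_neg. unfold Rdiv. apply Rmult_neg_pos. lra.
      apply Rinv_0_lt_compat; lra. } lra.
Qed.

Lemma Carg_chart2 (x y : R) : 0 < y -> Carg (x, y) = PI / 2 - atan (x / y).
Proof.
  intros Hy. assert (Hc : x / Cmod (x, y) = cos (PI / 2 - atan (x / y))).
  { rewrite cos_shift, sin_atan. rewrite Cmod_fact2 by lra. rewrite (Rabs_right y) by lra. field. split; [lra|].
    pose proof (sqrt1p_pos (x/y)). lra. }
  pose proof (atan_bound (x / y)) as Hb. pose proof PI_RGT_0.
  unfold Carg; simpl. destruct (Rle_dec 0 y) as [_|Hy']; [|lra].
  rewrite Hc. apply acos_cos. lra.
Qed.

Lemma Carg_chart3 (x y : R) : y < 0 -> Carg (x, y) = - (PI / 2) - atan (x / y).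
Proof.
  intros Hy. assert (Hc : x / Cmod (x, y) = cos (PI / 2 + atan (x / y))).
  { replace (cos (PI / 2 + atan (x / y))) with (- sin (atan (x / y))) by (rewrite sin_cos; ring).
    rewrite sin_atan. rewrite Cmod_fact2 by lra. rewrite (Rabs_left y) by lra. field. split; [lra|].
    pose proof (sqrt1p_pos (x/y)). lra. }
  pose proof (atan_bound (x / y)) as Hb. pose proof PI_RGT_0.
  unfold Carg; simpl. destruct (Rle_dec 0 y) as [Hy'|_]; [lra|].
  rewrite Hc. rewrite acos_cos by lra. ring.
Qed.

Lemma atan_lip (a b : R) : Rabs (atan a - atan b) <= Rabs (a - b).
Proof.
  destruct (MVT_gen atan b a (fun t => / (1 + t ^ 2))) as [c [Hc Heq]].
  - intros t _. apply is_derive_Reals. apply derivable_pt_lim_atan.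
  - intros t _. apply derivable_continuous_pt. exists (/ (1 + t ^ 2)). apply derivable_pt_lim_atan.
  - rewrite Heq, Rabs_mult. rewrite <- (Rmult_1_l (Rabs (a - b))) at 2.
    apply Rmult_le_compat_r. apply Rabs_pos.
    assert (0 <= c ^ 2) by (apply pow2_ge_0).
    rewrite Rabs_right. 2: { left; apply Rinv_0_lt_compat; lra. }
    rewrite <- Rinv_1. apply Rinv_le_contravar; lra.
Qed.

Lemma div_lip (a b a0 b0 e : R) : 0 < Rabs b0 -> Rabs (a - a0) <= e -> Rabs (b - b0) <= e ->
  e <= Rabs b0 / 2 -> Rabs (a / b - a0 / b0) <= 2 * (Rabs b0 + Rabs a0) / (b0 * b0) * e.
Proof.
  intros Hb0 Ha Hb He.
  assert (Hb' : Rabs b0 / 2 <= Rabs b).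
  { pose proof (Rabs_triang_inv b0 b). rewrite Rabs_minus_sym in Hb. lra. }
  assert (Hbn : b <> 0). { intros ->. rewrite Rabs_R0 in Hb'. lra. }
  assert (Hb0n : b0 <> 0). { intros ->. rewrite Rabs_R0 in Hb0. lra. }
  replace (a / b - a0 / b0) with (((a - a0) * b0 - a0 * (b - b0)) / (b * b0)) by (field; auto).
  unfold Rdiv. rewrite Rabs_mult, Rabs_inv, Rabs_mult.
  assert (N : Rabs ((a - a0) * b0 - a0 * (b - b0)) <= (Rabs b0 + Rabs a0) * e).
  { unfold Rminus at 1. eapply Rle_trans. apply Rabs_triang. rewrite Rabs_Ropp, !Rabs_mult.
    assert (Rabs (a - a0) * Rabs b0 <= e * Rabs b0) by (apply Rmult_le_compat_r; [apply Rabs_pos|lra]).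
    assert (Rabs a0 * Rabs (b - b0) <= Rabs a0 * e) by (apply Rmult_le_compat_l; [apply Rabs_pos|lra]).
    lra. }
  assert (Hbb : b0 * b0 = Rabs b0 * Rabs b0) by (rewrite <- Rabs_mult, Rabs_right; [ring|nra]).
  rewrite Hbb.
  apply Rle_trans with ((Rabs b0 + Rabs a0) * e * / (Rabs b0 / 2 * Rabs b0)).
  - apply Rmult_le_compat. apply Rabs_pos. left; apply Rinv_0_lt_compat; nra. exact N.
    apply Rinv_le_contravar. nra. apply Rmult_le_compat_r; lra.
  - right. field. lra.
Qed.

Lemma ln_lip (a b m : R) : 0 < m -> m <= a -> m <= b -> Rabs (ln a - ln b) <= Rabs (a - b) / m.
Proof.
  intros Hm Ha Hb.
  assert (L : forall u, 0 < u -> ln u <= u - 1).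
  { intros u Hu. pose proof (exp_ineq1_le (ln u)). rewrite exp_ln in H by lra. lra. }
  assert (H1 : ln a - ln b <= (a - b) / b).
  { rewrite <- ln_div by lra. replace ((a - b) / b) with (a / b - 1) by (field; lra).
    apply L. apply Rdiv_lt_0_compat; lra. }
  assert (H2 : ln b - ln a <= (b - a) / a).
  { rewrite <- ln_div by lra. replace ((b - a) / a) with (b / a - 1) by (field; lra).
    apply L. apply Rdiv_lt_0_compat; lra. }
  apply Rabs_le. split.
  - destruct (Rle_dec a b).
    + assert ((b - a) / a <= (b - a) / m).
      { unfold Rdiv. apply Rmult_le_compat_l. lra. apply Rinv_le_contravar; lra. }
      rewrite Rabs_minus_sym, Rabs_right by lra. lra.
    + assert (0 <= (a - b) / a) by (apply Rdiv_le_0_compat; lra).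
      assert ((b - a) / a = - ((a - b) / a)) by (field; lra).
      assert (0 <= Rabs (a - b) / m) by (apply Rdiv_le_0_compat; [apply Rabs_pos|lra]). lra.
  - destruct (Rle_dec b a).
    + assert ((a - b) / b <= (a - b) / m).
      { unfold Rdiv. apply Rmult_le_compat_l. lra. apply Rinv_le_contravar; lra. }
      rewrite Rabs_right by lra. lra.
    + assert (0 <= (b - a) / b) by (apply Rdiv_le_0_compat; lra).
      assert ((a - b) / b = - ((b - a) / b)) by (field; lra).
      assert (0 <= Rabs (a - b) / m) by (apply Rdiv_le_0_compat; [apply Rabs_pos|lra]). lra.
Qed.

Lemma comp_bounds (x y x0 y0 : R) :
  Rabs (x - x0) <= Cmod ((x, y) - (x0, y0))%C /\ Rabs (y - y0) <= Cmod ((x, y) - (x0, y0))%C.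
Proof.
  split.
  - pose proof (Re_le_Cmod ((x, y) - (x0, y0))%C) as H. simpl in H.
    replace (x + - x0) with (x - x0) in H by ring. exact H.
  - pose proof (Im_le_Cmod ((x, y) - (x0, y0))%C) as H. simpl in H.
    replace (y + - y0) with (y - y0) in H by ring. exact H.
Qed.

Lemma Carg_lip (x0 y0 : R) : (0 < x0 \/ y0 <> 0) -> exists K r, 0 < K /\ 0 < r /\
  forall x y, Cmod ((x, y) - (x0, y0))%C < r -> Rabs (Carg (x, y) - Carg (x0, y0)) <= K * Cmod ((x, y) - (x0, y0))%C.
Proof.
  intros H.
  destruct (Rlt_dec 0 x0) as [Hx0|Hx0].
  - exists (2 * (Rabs x0 + Rabs y0) / (x0 * x0)), (x0 / 2). split; [|split; [lra|]].
    { apply Rdiv_lt_0_compat. pose proof (Rabs_pos y0). rewrite Rabs_right by lra. lra. nra. }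
    intros x y Hh. destruct (comp_bounds x y x0 y0) as [Hx Hy].
    set (h := Cmod ((x, y) - (x0, y0))%C) in *.
    assert (0 < x) by (apply Rabs_le_between in Hx; lra).
    rewrite !Carg_chart1 by lra. eapply Rle_trans. apply atan_lip.
    apply div_lip; auto; rewrite ?(Rabs_right x0) by lra; lra.
  - assert (Hy0 : y0 <> 0) by (destruct H; [lra|auto]).
    assert (Hy0' : 0 < Rabs y0) by (apply Rabs_pos_lt; auto).
    exists (2 * (Rabs y0 + Rabs x0) / (y0 * y0)), (Rabs y0 / 2). split; [|split; [lra|]].
    { apply Rdiv_lt_0_compat. pose proof (Rabs_pos x0). lra.
      assert (0 < y0 * y0) by (destruct (Rlt_dec 0 y0); nra). lra. }
    intros x y Hh. destruct (comp_bounds x y x0 y0) as [Hx Hy].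
    set (h := Cmod ((x, y) - (x0, y0))%C) in *.
    destruct (Rlt_dec 0 y0) as [Hp|Hn].
    + rewrite Rabs_right in Hy0', Hh by lra.
      assert (0 < y) by (apply Rabs_le_between in Hy; lra).
      rewrite !Carg_chart2 by lra.
      replace (PI / 2 - atan (x / y) - (PI / 2 - atan (x0 / y0))) with (atan (x0 / y0) - atan (x / y)) by ring.
      rewrite Rabs_minus_sym. eapply Rle_trans. apply atan_lip.
      apply div_lip; auto; rewrite ?(Rabs_right y0) by lra; lra.
    + assert (y0 < 0) by lra. rewrite Rabs_left in Hy0', Hh by lra.
      assert (y < 0) by (apply Rabs_le_between in Hy; lra).
      rewrite !Carg_chart3 by lra.
      replace (- (PI / 2) - atan (x / y) - (- (PI / 2) - atan (x0 / y0))) with (atan (x0 / y0) - atan (x / y)) by ring.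
      rewrite Rabs_minus_sym. eapply Rle_trans. apply atan_lip.
      apply div_lip; auto; rewrite ?(Rabs_left y0) by lra; lra.
Qed.

Lemma Clog_lip (w0 : C) : (0 < fst w0 \/ snd w0 <> 0) -> exists K r, 0 < K /\ 0 < r /\
  forall w, Cmod (w - w0) < r -> Cmod (Clog w - Clog w0) <= K * Cmod (w - w0).
Proof.
  intros H. destruct w0 as [x0 y0]. simpl in H.
  assert (Hw0 : (x0, y0) <> RtoC 0).
  { intros E. injection E as E1 E2. destruct H; [lra|auto]. }
  assert (Hm : 0 < Cmod (x0, y0)) by (apply Cmod_gt_0; auto).
  set (m0 := Cmod (x0, y0)) in *.
  destruct (Carg_lip x0 y0 H) as [K2 [r2 [HK2 [Hr2 HC]]]].
  exists (2 / m0 + K2), (Rmin r2 (m0 / 2)). split; [|split].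
  { assert (0 < 2 / m0) by (apply Rdiv_lt_0_compat; lra). lra. }
  { apply Rmin_glb_lt; lra. }
  intros [x y] Hh.
  assert (Hh1 := Rmin_l r2 (m0 / 2)). assert (Hh2 := Rmin_r r2 (m0 / 2)).
  specialize (HC x y ltac:(lra)).
  set (h := Cmod ((x, y) - (x0, y0))%C) in *.
  assert (Hm1 := Cmod_rev (x0, y0) (x, y)). fold m0 h in Hm1.
  assert (Hm2 := Cmod_rev (x, y) (x0, y0)). rewrite Cmod_sub_sym in Hm2. fold h m0 in Hm2.
  set (m := Cmod (x, y)) in *.
  assert (Hl : Rabs (ln m - ln m0) <= h / (m0 / 2)).
  { eapply Rle_trans. apply ln_lip with (m := m0 / 2); lra.
    unfold Rdiv. apply Rmult_le_compat_r. left; apply Rinv_0_lt_compat; lra.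
    apply Rabs_le. lra. }
  assert (E : (Clog (x, y) - Clog (x0, y0))%C = (ln m - ln m0, Carg (x, y) - Carg (x0, y0))).
  { unfold Clog. apply injective_projections; simpl; fold m m0; ring. }
  rewrite E. eapply Rle_trans. apply Cmod_pair_le.
  replace (h / (m0 / 2)) with (2 / m0 * h) in Hl by (field; lra). lra.
Qed.

Lemma dC_Clog (w0 : C) : (0 < fst w0 \/ snd w0 <> 0) -> dC Clog w0 (/ w0)%C.
Proof.
  intros H.
  assert (Hw0 : w0 <> RtoC 0).
  { destruct w0 as [x0 y0]. intros E. injection E as E1 E2. simpl in H. destruct H; [lra|auto]. }
  assert (Hm : 0 < Cmod w0) by (apply Cmod_gt_0; auto).
  destruct (Clog_lip w0 H) as [K [r [HK [Hr HL]]]].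
  apply is_derive_C. intros eps He.
  destruct (Cex_o (eps / K)) as [d1 [Hd1 HE]]. apply Rdiv_lt_0_compat; lra.
  exists (Rmin (Rmin r (Cmod w0)) (d1 / K)). split.
  { repeat apply Rmin_glb_lt; try lra. apply Rdiv_lt_0_compat; lra. }
  intros w Hw.
  assert (H1 := Rmin_l (Rmin r (Cmod w0)) (d1 / K)). assert (H2 := Rmin_r (Rmin r (Cmod w0)) (d1 / K)).
  assert (H11 := Rmin_l r (Cmod w0)). assert (H12 := Rmin_r r (Cmod w0)).
  assert (Hwn : w <> RtoC 0).
  { intros ->. rewrite Cmod_sub_sym in Hw. replace (w0 - 0)%C with w0 in Hw by ring. lra. }
  specialize (HL w ltac:(lra)).
  set (h := Cmod (w - w0)) in *. set (d := (Clog w - Clog w0)%C) in *.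
  assert (Hdh : Cmod d < d1).
  { apply Rle_lt_trans with (K * h). exact HL.
    apply Rmult_lt_reg_l with (/ K). apply Rinv_0_lt_compat; lra.
    rewrite <- Rmult_assoc, Rinv_l, Rmult_1_l by lra. rewrite Rmult_comm. unfold Rdiv in H2. lra. }
  specialize (HE d Hdh).
  assert (Ed : Cex d = (w / w0)%C).
  { assert (E1 : Clog w = (Clog w0 + d)%C) by (unfold d; ring).
    assert (E2 := Cex_Clog w Hwn). rewrite E1, Cex_add, Cex_Clog in E2 by auto.
    rewrite <- E2. field. auto. }
  replace (d - (w - w0) * / w0)%C with (- (Cex d - 1 - d))%C.
  2: { rewrite Ed. fold d. field. auto. }
  rewrite Cmod_opp. eapply Rle_trans. exact HE.
  apply Rle_trans with (eps / K * (K * h)).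
  apply Rmult_le_compat_l; [apply Rlt_le, Rdiv_lt_0_compat; lra | exact HL].
  right. field. lra.
Qed.

Lemma Ci3 : Cpow Ci 3 = (- Ci)%C. Proof. apply injective_projections; simpl; ring. Qed.
Lemma Ci4 : Cpow Ci 4 = RtoC 1. Proof. apply injective_projections; simpl; ring. Qed.

Ltac Cfield := field_simplify_eq; [rewrite ?Ci4, ?Ci3, ?Ci2; ring | ..].

Lemma dom_1m (z : C) : atan_dom z -> 0 < fst (1 - Ci * z)%C \/ snd (1 - Ci * z)%C <> 0.
Proof.
  destruct z as [x y]. unfold atan_dom; simpl. intros H.
  destruct (Req_dec x 0) as [->|Hx].
  - left. assert (Rabs y < 1) by (destruct (Rlt_dec (Rabs y) 1); auto; exfalso; apply H; split; [auto|lra]).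
    apply Rabs_def2 in H0. lra.
  - right. intros E. apply Hx. lra.
Qed.

Lemma dom_1p (z : C) : atan_dom z -> 0 < fst (1 + Ci * z)%C \/ snd (1 + Ci * z)%C <> 0.
Proof.
  destruct z as [x y]. unfold atan_dom; simpl. intros H.
  destruct (Req_dec x 0) as [->|Hx].
  - left. assert (Rabs y < 1) by (destruct (Rlt_dec (Rabs y) 1); auto; exfalso; apply H; split; [auto|lra]).
    apply Rabs_def2 in H0. lra.
  - right. intros E. apply Hx. lra.
Qed.

Lemma nz_of_dom (w : C) : 0 < fst w \/ snd w <> 0 -> w <> RtoC 0.
Proof. destruct w as [a b]; simpl. intros H E. injection E as E1 E2. destruct H; [lra|auto]. Qed.

Lemma one_plus_sq (z : C) : (1 + z * z)%C = ((1 - Ci * z) * (1 + Ci * z))%C.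
Proof. apply injective_projections; destruct z; simpl; ring. Qed.

Lemma dC_Catan (z : C) : atan_dom z -> dC Catan z (/ (1 + z * z))%C.
Proof.
  intros Hz.
  assert (N1 := nz_of_dom _ (dom_1m z Hz)). assert (N2 := nz_of_dom _ (dom_1p z Hz)).
  assert (N3 : (1 + z * z)%C <> RtoC 0) by (rewrite one_plus_sq; apply Cmult_neq_0; auto).
  eapply dC_ext_val. unfold Catan.
  apply dC_scal. apply dC_minus.
  - apply dC_comp with (f := Clog) (g := fun y => (1 - Ci * y)%C).
    apply dC_Clog, dom_1m, Hz.
    apply dC_minus. apply dC_const. apply dC_scal. apply dC_id.
  - apply dC_comp with (f := Clog) (g := fun y => (1 + Ci * y)%C).
    apply dC_Clog, dom_1p, Hz.
    apply dC_plus. apply dC_const. apply dC_scal. apply dC_id.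
  - rewrite one_plus_sq. Cfield. repeat split; auto.
Qed.

Lemma sumC_S (f : nat -> C) n : @sum_n C_AbelianMonoid f (S n) = (@sum_n C_AbelianMonoid f n + f (S n))%C :> C.
Proof. exact (sum_Sn f n). Qed.
Lemma sumC_O (f : nat -> C) : @sum_n C_AbelianMonoid f 0 = f 0%nat :> C.
Proof. exact (sum_O f). Qed.
Lemma sumC_shift (f : nat -> C) n :
  @sum_n C_AbelianMonoid f (S n) = (f 0%nat + @sum_n C_AbelianMonoid (fun k => f (S k)) n)%C :> C.
Proof.
  induction n as [|n IH].
  - rewrite sumC_S, !sumC_O. reflexivity.
  - rewrite sumC_S, IH, sumC_S. ring.
Qed.
Lemma sumC_ext_loc (f g : nat -> C) n : (forall k, (k <= n)%nat -> f k = g k) ->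
  @sum_n C_AbelianMonoid f n = @sum_n C_AbelianMonoid g n :> C.
Proof. intros H. exact (sum_n_ext_loc f g n H). Qed.
Lemma sumC_plus (f g : nat -> C) n :
  @sum_n C_AbelianMonoid (fun k => f k + g k)%C n = (@sum_n C_AbelianMonoid f n + @sum_n C_AbelianMonoid g n)%C :> C.
Proof. induction n as [|n IH]. rewrite !sumC_O; reflexivity. rewrite !sumC_S, IH. ring. Qed.
Lemma sumC_scal (c : C) (f : nat -> C) n :
  @sum_n C_AbelianMonoid (fun k => c * f k)%C n = (c * @sum_n C_AbelianMonoid f n)%C :> C.
Proof. induction n as [|n IH]. rewrite !sumC_O; reflexivity. rewrite !sumC_S, IH. ring. Qed.

Lemma Cpow_S (x : C) n : Cpow x (S n) = (x * Cpow x n)%C.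
Proof. reflexivity. Qed.


Definition term (s q : C) (m k : nat) : C :=
  (Cpow (RtoC (-1)) k * RtoC (INR (binom k (m - k))) * Cpow s (2 * k) * Cpow q (k + 1))%C.

Definition V (s q : C) (m : nat) : C := (@sum_n C_AbelianMonoid (term s q m) m : C).

Lemma term_rec (s q : C) (m k : nat) : (k <= m)%nat ->
  term s q (S (S m)) (S k) = (- (s * s * q) * (term s q m k + term s q (S m) k))%C.
Proof.
  intros Hk. unfold term.
  replace (S (S m) - S k)%nat with (S (m - k)) by lia.
  replace (S m - k)%nat with (S (m - k)) by lia.
  replace (2 * S k)%nat with (S (S (2 * k))) by lia.
  replace (S k + 1)%nat with (S (k + 1)) by lia.
  change (binom (S k) (S (m - k))) with (binom k (m - k) + binom k (S (m - k)))%nat.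
  rewrite plus_INR, RtoC_plus, !Cpow_S. ring.
Qed.

Lemma term_top (s q : C) (m : nat) : term s q (S (S m)) (S (S m)) = (- (s * s * q) * term s q (S m) (S m))%C.
Proof.
  unfold term. rewrite !Nat.sub_diag.
  replace (2 * S (S m))%nat with (S (S (2 * S m))) by lia.
  replace (S (S m) + 1)%nat with (S (S m + 1)) by lia.
  replace (binom (S (S m)) 0) with 1%nat by reflexivity.
  replace (binom (S m) 0) with 1%nat by reflexivity.
  rewrite !Cpow_S. ring.
Qed.

Lemma term_bot (s q : C) (m : nat) : term s q (S (S m)) 0 = RtoC 0.
Proof. unfold term. simpl binom. simpl INR. ring. Qed.

Lemma V_rec (s q : C) (m : nat) : V s q (S (S m)) = (- (s * s * q) * (V s q (S m) + V s q m))%C.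
Proof.
  unfold V. rewrite sumC_shift, term_bot, sumC_S, term_top.
  rewrite (sumC_ext_loc (fun k => term s q (S (S m)) (S k)) (fun k => - (s * s * q) * (term s q m k + term s q (S m) k))%C m)
    by (intros; apply term_rec; auto).
  rewrite sumC_scal, sumC_plus. rewrite (sumC_S (term s q (S m)) m). ring.
Qed.

Definition E (s x y : C) (m : nat) : C :=
  (Cpow (RtoC (-1)) m * Cpow s m * (Ci / 2) * (Cpow x (S m) - Cpow y (S m)))%C.

Lemma E_rec (s q x y : C) (Hxy1 : (x + y)%C = (s * q)%C) (Hxy2 : (x * y)%C = q) (m : nat) :
  E s x y (S (S m)) = (- (s * s * q) * (E s x y (S m) + E s x y m))%C.
Proof.
  unfold E. rewrite !Cpow_S.
  transitivity (Cpow (RtoC (-1)) m * Cpow s m * (Ci / 2) * (s * s) *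
     ((x + y) * (x * Cpow x m * x - y * Cpow y m * y) - (x * y) * (x * Cpow x m - y * Cpow y m)))%C.
  { ring. }
  rewrite Hxy1, Hxy2. ring.
Qed.

Lemma V_E (s q x y : C) (Hxy1 : (x + y)%C = (s * q)%C) (Hxy2 : (x * y)%C = q)
  (Hxy3 : (Ci / 2 * (x - y))%C = q) (m : nat) : V s q m = E s x y m.
Proof.
  assert (H : forall m', V s q m' = E s x y m' /\ V s q (S m') = E s x y (S m')).
  { clear m. intros m. induction m as [|m IH].
    - split.
      + unfold V, E, term. rewrite sumC_O. cbn [binom Cpow Nat.sub Nat.mul Nat.add]. rewrite INR_1.
        rewrite <- Hxy3. ring.
      + unfold V, E. rewrite sumC_S, sumC_O. unfold term. cbn [binom Cpow Nat.sub Nat.mul Nat.add].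
        rewrite INR_0, INR_1.
        transitivity (- (s * s) * q * q)%C. ring.
        transitivity (- s * (Ci / 2 * (x - y)) * (x + y))%C.
        rewrite Hxy1, Hxy3. ring. ring.
    - destruct IH as [IH1 IH2]. split; auto.
      rewrite V_rec, (E_rec s q x y Hxy1 Hxy2), IH1, IH2. reflexivity. }
  apply H.
Qed.


Definition gA (m : nat) (w : C) : C :=
  (RtoC (INR (Factorial.fact m)) * Cpow (RtoC (-1)) m * (Ci / 2) *
   (Cpow (/ (w + Ci)) (S m) - Cpow (/ (w - Ci)) (S m)))%C.

Definition gs (k : nat) (w : C) : C := match k with O => Catan w | S m => gA m w end.

Lemma dom_pm (w : C) : atan_dom w -> (w + Ci)%C <> RtoC 0 /\ (w - Ci)%C <> RtoC 0.
Proof.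
  destruct w as [a b]. unfold atan_dom; simpl. intros H. split; intros E; injection E as E1 E2.
  - apply H. split; [lra|]. replace b with (-1) by lra. rewrite Rabs_left by lra. lra.
  - apply H. split; [lra|]. replace b with 1 by lra. rewrite Rabs_R1; lra.
Qed.

Lemma d0 (w : C) : atan_dom w -> dC (gs 0) w (gs 1 w).
Proof.
  intros Hw. destruct (dom_pm w Hw) as [N1 N2].
  assert (N3 : (1 + w * w)%C <> RtoC 0).
  { replace (1 + w * w)%C with ((w + Ci) * (w - Ci))%C. apply Cmult_neq_0; auto.
    apply injective_projections; destruct w; simpl; ring. }
  simpl gs. eapply dC_ext_val. apply dC_Catan; auto.
  unfold gA. change (Factorial.fact 0) with 1%nat. rewrite INR_1. simpl Cpow. Cfield. auto.
Qed.

Lemma dinvp (c w : C) : (w + c)%C <> RtoC 0 ->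
  dC (fun y => / (y + c))%C w (- (/ (w + c) * / (w + c)))%C.
Proof.
  intros N. eapply dC_ext_val.
  apply dC_comp with (f := fun y => (/ y)%C) (g := fun y => (y + c)%C).
  apply dC_Cinv; auto. apply dC_plus. apply dC_id. apply dC_const.
  field. auto.
Qed.

Lemma dS (m : nat) (w : C) : atan_dom w -> dC (gs (S m)) w (gs (S (S m)) w).
Proof.
  intros Hw. destruct (dom_pm w Hw) as [N1 N2].
  simpl gs. unfold gA. eapply dC_ext_val.
  - apply dC_scal. apply dC_minus.
    + apply dC_pow. apply dinvp. exact N1.
    + apply dC_pow. apply (dinvp (- Ci)%C). exact N2.
  - change (Factorial.fact (S m)) with (S m * Factorial.fact m)%nat. rewrite mult_INR, RtoC_mult, !Cpow_S.
    replace (w + - Ci)%C with (w - Ci)%C by ring.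
    set (A := Cpow (/ (w + Ci)) m). set (B := Cpow (/ (w - Ci)) m).
    ring.
Qed.

Lemma Cpow_nz (v : C) n : v <> RtoC 0 -> Cpow v n <> RtoC 0.
Proof.
  intros H. induction n as [|n IH]; simpl.
  - intros E. injection E as E1. lra.
  - apply Cmult_neq_0; auto.
Qed.

Lemma Cpow_inv (v : C) n : v <> RtoC 0 -> (/ Cpow v n)%C = Cpow (/ v)%C n.
Proof.
  intros H. induction n as [|n IH]; simpl.
  - apply injective_projections; simpl; field.
  - rewrite <- IH. field. split; auto. apply Cpow_nz; auto.
Qed.

Lemma value1 (m : nat) (z : C) : atan_dom z -> z <> RtoC 0 ->
  gs (S m) z =
  (INR (Factorial.fact (S m - 1)) / Cpow (2 * z) (S m - 1) *
        sum_n (fun k : nat =>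
          (-1) ^ k * INR (binom k (S m - k - 1)) * Cpow (2 * z) (2 * k)
            / Cpow (1 + z * z) (k + 1)) (S m - 1))%C.
Proof.
  intros Hz Hz0. destruct (dom_pm z Hz) as [N1 N2].
  assert (N3 : (1 + z * z)%C <> RtoC 0).
  { replace (1 + z * z)%C with ((z + Ci) * (z - Ci))%C. apply Cmult_neq_0; auto.
    apply injective_projections; destruct z; simpl; ring. }
  assert (N4 : (2 * z)%C <> RtoC 0).
  { apply Cmult_neq_0; auto. intros E. injection E as E1. lra. }
  replace (S m - 1)%nat with m by lia.
  rewrite (sumC_ext_loc _ (term (2 * z) (/ (1 + z * z)) m) m).
  2: { intros k Hk. unfold term. replace (S m - k - 1)%nat with (m - k)%nat by lia.
       unfold Cdiv. rewrite Cpow_inv by auto. reflexivity. }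
  change (@sum_n C_AbelianMonoid (term (2 * z) (/ (1 + z * z)) m) m) with (V (2 * z) (/ (1 + z * z)) m).
  rewrite (V_E (2 * z) (/ (1 + z * z)) (/ (z + Ci)) (/ (z - Ci))).
  - unfold E, gs, gA. field. apply Cpow_nz; auto.
  - Cfield. repeat split; auto.
  - Cfield. repeat split; auto.
  - Cfield. repeat split; auto.
Qed.

Lemma part1 : forall (n : nat) (z : C), (1 <= n)%nat -> atan_dom z -> z <> 0%C ->
     is_nth_cderive atan_dom Catan n z
       (INR (Factorial.fact (n - 1)) / Cpow (2 * z) (n - 1) *
        sum_n (fun k : nat =>
          (-1) ^ k * INR (binom k (n - k - 1)) * Cpow (2 * z) (2 * k)
            / Cpow (1 + z * z) (k + 1)) (n - 1))%C.
Proof.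
  intros n z Hn Hz Hz0. exists gs. split; [|split].
  - intros w _. reflexivity.
  - intros [|k] w Hw. apply d0; auto. apply dS; auto.
  - destruct n as [|m]; [lia|]. apply value1; auto.
Qed.

Definition sg : C := (- / 2, / 2).
Definition sgb : C := (- / 2, - / 2).
Lemma sg_eq : sg = ((-1 + Ci) / 2)%C.
Proof. unfold sg. apply injective_projections; simpl; field. Qed.
Lemma sgb_eq : sgb = ((-1 - Ci) / 2)%C.
Proof. unfold sgb. apply injective_projections; simpl; field. Qed.

Definition sk (k : nat) : R := / Rpower 2 (INR k / 2).
Definition th (k : nat) : R := 3 * INR k * PI / 4.

Lemma Rpower_pos2 (x : R) : 0 < Rpower 2 x.
Proof. unfold Rpower. apply exp_pos. Qed.

Lemma sk_S (k : nat) : sk (S k) = sk k / sqrt 2.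
Proof.
  unfold sk. rewrite S_INR. replace ((INR k + 1) / 2) with (INR k / 2 + / 2) by field.
  rewrite Rpower_plus, Rpower_sqrt by lra. field. repeat split;
  apply Rgt_not_eq; first [apply sqrt_lt_R0; lra | apply Rpower_pos2].
Qed.

Lemma sk_0 : sk 0 = 1.
Proof. unfold sk. simpl. replace (0 / 2) with 0 by field. rewrite Rpower_O by lra. apply Rinv_1. Qed.

Lemma th_S (k : nat) : th (S k) = th k + (PI - PI / 4).
Proof. unfold th. rewrite S_INR. field. Qed.

Lemma cos34 : cos (PI - PI / 4) = - (1 / sqrt 2).
Proof. rewrite Rtrigo_facts.cos_pi_minus, cos_PI4. reflexivity. Qed.
Lemma sin34 : sin (PI - PI / 4) = 1 / sqrt 2.
Proof. rewrite sin_PI_x, sin_PI4. reflexivity. Qed.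

Lemma sqrt2_sq : sqrt 2 * sqrt 2 = 2.
Proof. apply sqrt_sqrt. lra. Qed.

Lemma pow_sg (k : nat) : Cpow sg k = (sk k * cos (th k), sk k * sin (th k)).
Proof.
  induction k as [|k IH].
  - simpl. rewrite sk_0. unfold th. simpl. replace (3 * 0 * PI / 4) with 0 by field.
    rewrite cos_0, sin_0. apply injective_projections; simpl; ring.
  - rewrite Cpow_S, IH, sk_S, th_S, cos_plus, sin_plus, cos34, sin34. unfold sg.
    assert (Hs : sqrt 2 <> 0) by (apply Rgt_not_eq, sqrt_lt_R0; lra).
    apply injective_projections; simpl.
    + transitivity (sk k * (- cos (th k) - sin (th k)) / (sqrt 2 * sqrt 2)).
      rewrite sqrt2_sq. field. field. auto.
    + transitivity (sk k * (cos (th k) - sin (th k)) / (sqrt 2 * sqrt 2)).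
      rewrite sqrt2_sq. field. field. auto.
Qed.

Lemma pow_sgb (k : nat) : Cpow sgb k = (sk k * cos (th k), - (sk k * sin (th k))).
Proof.
  induction k as [|k IH].
  - simpl. rewrite sk_0. unfold th. simpl. replace (3 * 0 * PI / 4) with 0 by field.
    rewrite cos_0, sin_0. apply injective_projections; simpl; ring.
  - rewrite Cpow_S, IH, sk_S, th_S, cos_plus, sin_plus, cos34, sin34. unfold sgb.
    assert (Hs : sqrt 2 <> 0) by (apply Rgt_not_eq, sqrt_lt_R0; lra).
    apply injective_projections; simpl.
    + transitivity (sk k * (- cos (th k) - sin (th k)) / (sqrt 2 * sqrt 2)).
      rewrite sqrt2_sq. field. field. auto.
    + transitivity (- (sk k * (cos (th k) - sin (th k))) / (sqrt 2 * sqrt 2)).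
      rewrite sqrt2_sq. field. field. auto.
Qed.

Lemma key_coef (k : nat) : (Ci / 2 * (Cpow sgb k - Cpow sg k))%C = RtoC (sk k * sin (th k)).
Proof.
  rewrite pow_sg, pow_sgb. apply injective_projections; simpl; field.
Qed.

Definition acoef (k : nat) : R := sk k * sin (th k) / INR k.

Lemma T_S (n : nat) : T (S n) = T n + (-1) ^ (S n) / (Rpower 2 (INR (S n) / 2) * INR (S n))
                 * sin (3 * INR (S n) * PI / 4).
Proof. reflexivity. Qed.

Lemma T_step (n : nat) : T (S n) - T n = (-1) ^ (S n) * acoef (S n).
Proof.
  rewrite T_S. unfold acoef, sk, th. field. split.
  apply Rgt_not_eq, Rpower_pos2. apply not_0_INR; lia.
Qed.

Fixpoint SS (N : nat) (u : C) : C :=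
  match N with O => RtoC 0 | S M => (SS M u + RtoC (acoef (S M)) * Cpow u (S M))%C end.
Fixpoint DS (N : nat) (u : C) : C :=
  match N with O => RtoC 0 | S M => (DS M u + RtoC (sk (S M) * sin (th (S M))) * Cpow u M)%C end.

Lemma dSS (N : nat) (u : C) : dC (SS N) u (DS N u).
Proof.
  induction N as [|M IH].
  - simpl. apply dC_const.
  - simpl SS. simpl DS. apply dC_plus. exact IH.
    eapply dC_ext_val. apply dC_scal. apply dC_pow. apply dC_id.
    rewrite <- RtoC_mult. unfold acoef.
    assert (INR (S M) <> 0) by (apply not_0_INR; lia).
    apply injective_projections; simpl; field; auto.
Qed.

Lemma Cpow_mul (a b : C) n : Cpow (a * b) n = (Cpow a n * Cpow b n)%C.
Proof. induction n as [|n IH]; simpl. apply injective_projections; simpl; ring. rewrite IH. ring. Qed.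

Lemma DS_closed (N : nat) (u : C) : (1 - u * sg)%C <> RtoC 0 -> (1 - u * sgb)%C <> RtoC 0 ->
  DS N u = (Ci / 2 * (sgb * (1 - Cpow (u * sgb) N) / (1 - u * sgb) - sg * (1 - Cpow (u * sg) N) / (1 - u * sg)))%C.
Proof.
  intros N1 N2. induction N as [|M IH].
  - cbn [DS Cpow]. field. auto.
  - simpl DS. rewrite IH, <- key_coef, !Cpow_S, !Cpow_mul. field. auto.
Qed.

Lemma Catan_d_sg (u : C) : (1 - u * sg)%C <> RtoC 0 -> (1 - u * sgb)%C <> RtoC 0 ->
  (1 + (1 + u) * (1 + u))%C <> RtoC 0 ->
  (/ (1 + (1 + u) * (1 + u)))%C = (Ci / 2 * (sgb / (1 - u * sgb) - sg / (1 - u * sg)))%C.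
Proof.
  intros N1 N2 N3. rewrite sg_eq, sgb_eq in *. Cfield.
  repeat split; intros E; cbv beta in E.
  - apply N1. transitivity ((2 - u * (-1 + Ci)) / 2)%C. field. rewrite E. field.
  - apply N2. transitivity ((2 - u * (-1 - Ci)) / 2)%C. field. rewrite E. field.
  - apply N3. exact E.
Qed.

Definition r0 : R := / sqrt 2.

Lemma sqrt2_pos : 0 < sqrt 2.
Proof. apply sqrt_lt_R0; lra. Qed.

Lemma r0_pos : 0 < r0.
Proof. unfold r0. apply Rinv_0_lt_compat, sqrt2_pos. Qed.

Lemma Cmod_sg : Cmod sg = r0.
Proof. unfold Cmod, sg, r0; simpl. rewrite <- sqrt_inv. f_equal. field. Qed.
Lemma Cmod_sgb : Cmod sgb = r0.
Proof. unfold Cmod, sgb, r0; simpl. rewrite <- sqrt_inv. f_equal. field. Qed.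

Lemma Cmod_1m (v : C) : 1 - Cmod v <= Cmod (1 - v)%C.
Proof.
  pose proof (Cmod_rev 1 (1 - v)%C) as H. rewrite Cmod_1 in H.
  replace (1 - v - 1)%C with (- v)%C in H by ring. rewrite Cmod_opp in H. exact H.
Qed.

Lemma term_bound (c u : C) (rr : R) N : Cmod c = r0 -> Cmod u <= rr -> r0 * rr < 1 ->
  (1 - u * c)%C <> RtoC 0 /\
  Cmod (c * Cpow (u * c) N / (1 - u * c))%C <= r0 * (r0 * rr) ^ N / (1 - r0 * rr).
Proof.
  intros Hc Hu Hr. pose proof r0_pos. assert (0 <= Cmod u) by apply Cmod_ge_0.
  assert (Hd : 1 - r0 * rr <= Cmod (1 - u * c)%C).
  { eapply Rle_trans; [|apply Cmod_1m]. rewrite Cmod_mult, Hc.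
    assert (Cmod u * r0 <= rr * r0) by (apply Rmult_le_compat_r; lra). lra. }
  assert (Hn : (1 - u * c)%C <> RtoC 0).
  { intros E. rewrite E, Cmod_0 in Hd. lra. }
  split; auto.
  rewrite Cmod_div by auto. rewrite Cmod_mult, Cmod_pow, Cmod_mult, Hc.
  unfold Rdiv. apply Rmult_le_compat.
  - apply Rmult_le_pos; [lra|]. apply pow_le. apply Rmult_le_pos; lra.
  - left. apply Rinv_0_lt_compat. lra.
  - apply Rmult_le_compat_l; [lra|]. apply pow_incr. split. apply Rmult_le_pos; lra. nra.
  - apply Rinv_le_contravar; lra.
Qed.

Definition Hd (N : nat) (u : C) : C :=
  (Ci / 2 * (sgb * Cpow (u * sgb) N / (1 - u * sgb) - sg * Cpow (u * sg) N / (1 - u * sg)))%C.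

Lemma Hd_bound (N : nat) (u : C) (rr : R) : Cmod u <= rr -> r0 * rr < 1 ->
  Cmod (Hd N u) <= r0 * (r0 * rr) ^ N / (1 - r0 * rr).
Proof.
  intros Hu Hr. unfold Hd.
  destruct (term_bound sgb u rr N Cmod_sgb Hu Hr) as [_ B1].
  destruct (term_bound sg u rr N Cmod_sg Hu Hr) as [_ B2].
  rewrite Cmod_mult. 
  assert (Cmod (Ci / 2)%C = / 2).
  { unfold Cdiv. rewrite Cmod_mult, Cmod_Ci, Cmod_inv. rewrite Cmod_R, Rabs_right by lra. ring.
    intros E. injection E as E1. lra. }
  rewrite H. unfold Cminus. eapply Rle_trans.
  apply Rmult_le_compat_l. lra. eapply Rle_trans. apply Cmod_triangle. rewrite Cmod_opp.
  apply Rplus_le_compat; [exact B1 | exact B2]. lra.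
Qed.

Lemma ray_deriv (F : C -> C) (w : C) (t0 : R) (l : C) :
  dC F (RtoC t0 * w)%C l ->
  derivable_pt_lim (fun t => fst (F (RtoC t * w)%C)) t0 (fst (w * l)%C) /\
  derivable_pt_lim (fun t => snd (F (RtoC t * w)%C)) t0 (snd (w * l)%C).
Proof.
  intros HF. pose proof (is_derive_C_inv _ _ _ HF) as H.
  assert (Hw : 0 <= Cmod w) by apply Cmod_ge_0.
  assert (Key : forall eps, 0 < eps -> exists delta : posreal, forall h, h <> 0 -> Rabs h < delta ->
    Cmod ((F (RtoC (t0 + h) * w) - F (RtoC t0 * w)) / RtoC h - w * l)%C < eps).
  { intros eps He. destruct (H (eps / (Cmod w + 1))) as [d [Hd Hy]].
    apply Rdiv_lt_0_compat; lra.
    assert (Hd' : 0 < d / (Cmod w + 1)) by (apply Rdiv_lt_0_compat; lra).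
    exists (mkposreal _ Hd'). intros h Hh Hlt. simpl in Hlt.
    assert (Ey : (RtoC (t0 + h) * w - RtoC t0 * w)%C = (RtoC h * w)%C)
      by (rewrite RtoC_plus; ring).
    assert (Hm : Cmod (RtoC (t0 + h) * w - RtoC t0 * w)%C = Rabs h * Cmod w)
      by (rewrite Ey, Cmod_mult, Cmod_R; reflexivity).
    assert (Hlt2 : Rabs h * Cmod w < d).
    { apply Rle_lt_trans with (Rabs h * (Cmod w + 1)).
      apply Rmult_le_compat_l; [apply Rabs_pos|lra].
      apply (Rmult_lt_reg_r (/ (Cmod w + 1))). apply Rinv_0_lt_compat; lra.
      rewrite Rmult_assoc, Rinv_r by lra. rewrite Rmult_1_r. exact Hlt. }
    specialize (Hy (RtoC (t0 + h) * w)%C ltac:(rewrite Hm; exact Hlt2)).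
    rewrite Hm, Ey in Hy.
    assert (Hh' : RtoC h <> RtoC 0) by (intros E; injection E; auto).
    replace ((F (RtoC (t0 + h) * w) - F (RtoC t0 * w)) / RtoC h - w * l)%C
      with ((F (RtoC (t0 + h) * w) - F (RtoC t0 * w) - RtoC h * w * l) / RtoC h)%C
      by (field; auto).
    rewrite Cmod_div by auto. rewrite Cmod_R.
    assert (Hah : 0 < Rabs h) by (apply Rabs_pos_lt; auto).
    apply (Rmult_lt_reg_r (Rabs h)); auto. unfold Rdiv. rewrite Rmult_assoc, Rinv_l by lra.
    rewrite Rmult_1_r. eapply Rle_lt_trans. exact Hy.
    idtac.
    apply Rlt_le_trans with (eps / (Cmod w + 1) * ((Cmod w + 1) * Rabs h)).
    apply Rmult_lt_compat_l. apply Rdiv_lt_0_compat; lra. nra.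
    right. field. lra. }
  split; intros eps He; destruct (Key eps He) as [delta Hk]; exists delta; intros h Hh Hlt;
    specialize (Hk h Hh Hlt).
  - eapply Rle_lt_trans; [|exact Hk]. eapply Rle_trans; [|apply Re_le_Cmod].
    right. f_equal. unfold Cdiv. simpl. field. auto.
  - eapply Rle_lt_trans; [|exact Hk]. eapply Rle_trans; [|apply Im_le_Cmod].
    right. f_equal. unfold Cdiv. simpl. field. auto.
Qed.

Lemma seg_mvt (F dF : C -> C) (w : C) (M : R) :
  (forall t, 0 <= t <= 1 -> dC F (RtoC t * w)%C (dF (RtoC t * w)%C)) ->
  (forall t, 0 <= t <= 1 -> Cmod (dF (RtoC t * w)%C) <= M) ->
  Cmod (F w - F (RtoC 0))%C <= 2 * (M * Cmod w).
Proof.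
  intros HD HM.
  assert (Comp : forall (pr : C -> R), (pr = fst \/ pr = snd) ->
    Rabs (pr (F (RtoC 1 * w)%C) - pr (F (RtoC 0 * w)%C)) <= M * Cmod w).
  { intros pr Hpr.
    destruct (MVT_gen (fun t => pr (F (RtoC t * w)%C)) 0 1 (fun t => pr (w * dF (RtoC t * w))%C))
      as [c [Hc Heq]].
    - intros t Ht. rewrite Rmin_left, Rmax_right in Ht by lra. apply is_derive_Reals.
      destruct (ray_deriv F w t _ (HD t ltac:(lra))) as [D1 D2]. destruct Hpr as [->| ->]; auto.
    - intros t Ht. rewrite Rmin_left, Rmax_right in Ht by lra.
      destruct (ray_deriv F w t _ (HD t ltac:(lra))) as [D1 D2].
      destruct Hpr as [->| ->]; apply derivable_continuous_pt; eexists; eauto.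
    - rewrite Rmin_left, Rmax_right in Hc by lra.
      rewrite Heq. rewrite Rmult_minus_distr_l, Rmult_1_r, Rmult_0_r, Rminus_0_r.
      eapply Rle_trans. destruct Hpr as [->| ->]; [apply Re_le_Cmod | apply Im_le_Cmod].
      rewrite Cmod_mult, Rmult_comm. apply Rmult_le_compat_r. apply Cmod_ge_0. apply HM; lra. }
  replace (RtoC 1 * w)%C with w in Comp by ring.
  replace (RtoC 0 * w)%C with (RtoC 0) in Comp by ring.
  pose proof (Comp fst (or_introl eq_refl)) as C1. pose proof (Comp snd (or_intror eq_refl)) as C2.
  rewrite (surjective_pairing (F w - F (RtoC 0))%C). eapply Rle_trans. apply Cmod_pair_le.
  simpl. unfold Rminus in C1, C2. lra.
Qed.

Lemma disk_dom (u : C) : Cmod u < sqrt 2 -> atan_dom (1 + u)%C.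
Proof.
  intros H. assert (H2 : Cmod u * Cmod u < 2).
  { pose proof (Cmod_ge_0 u). pose proof sqrt2_pos. pose proof sqrt2_sq. nra. }
  destruct u as [a b]. rewrite Cmod_sq in H2. unfold atan_dom; simpl. intros [E1 E2].
  assert (a = -1) by lra. subst a.
  replace (0 + b) with b in E2 by ring.
  destruct (Rle_dec 0 b); [rewrite Rabs_right in E2 by lra | rewrite Rabs_left in E2 by lra]; nra.
Qed.

Lemma nz_sq (z : C) : atan_dom z -> (1 + z * z)%C <> RtoC 0.
Proof.
  intros Hz. destruct (dom_pm z Hz) as [N1 N2].
  replace (1 + z * z)%C with ((z + Ci) * (z - Ci))%C. apply Cmult_neq_0; auto.
  apply injective_projections; destruct z; simpl; ring.
Qed.

Lemma Catan_1 : Catan (RtoC 1) = RtoC (PI / 4).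
Proof.
  unfold Catan.
  replace (1 - Ci * RtoC 1)%C with ((1, -1) : C) by (apply injective_projections; simpl; ring).
  replace (1 + Ci * RtoC 1)%C with ((1, 1) : C) by (apply injective_projections; simpl; ring).
  unfold Clog. rewrite !Carg_chart1 by lra.
  replace (-1 / 1) with (- 1) by field. replace (1 / 1) with 1 by field.
  replace (atan (-1)) with (- atan 1) by (rewrite <- atan_opp; f_equal; lra). rewrite atan_1.
  replace (Cmod (1, -1)) with (Cmod (1, 1)) by (unfold Cmod; simpl; f_equal; ring).
  apply injective_projections; simpl; field.
Qed.

Lemma SS_0 (N : nat) : SS N (RtoC 0) = RtoC 0.
Proof. induction N as [|M IH]; simpl SS. reflexivity. rewrite IH. cbn [Cpow]. ring. Qed.

Lemma main_est (w : C) (N : nat) : Cmod w < sqrt 2 ->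
  Cmod (Catan (1 + w) - RtoC (PI / 4) - SS N w)%C <=
  2 * (r0 * (r0 * Cmod w) ^ N / (1 - r0 * Cmod w) * Cmod w).
Proof.
  intros Hw. set (rr := Cmod w) in *.
  assert (Hrr : r0 * rr < 1).
  { unfold r0. pose proof sqrt2_pos. apply (Rmult_lt_reg_l (sqrt 2)); auto.
    rewrite <- Rmult_assoc, Rinv_r by lra. lra. }
  pose (F := fun u => (Catan (1 + u) - RtoC (PI / 4) - SS N u)%C).
  pose (dF := fun u => (/ (1 + (1 + u) * (1 + u)) - DS N u)%C).
  assert (Hu : forall t, 0 <= t <= 1 -> Cmod (RtoC t * w)%C <= rr).
  { intros t Ht. rewrite Cmod_mult, Cmod_R, Rabs_right by lra. unfold rr.
    pose proof (Cmod_ge_0 w). nra. }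
  assert (Hu2 : forall t, 0 <= t <= 1 -> Cmod (RtoC t * w)%C < sqrt 2).
  { intros t Ht. specialize (Hu t Ht). unfold rr in *. lra. }
  pose proof (seg_mvt F dF w (r0 * (r0 * rr) ^ N / (1 - r0 * rr))) as MV.
  replace (F w - F (RtoC 0))%C with (Catan (1 + w) - RtoC (PI / 4) - SS N w)%C in MV.
  2: { unfold F. rewrite SS_0. replace (1 + RtoC 0)%C with (RtoC 1) by ring. rewrite Catan_1. ring. }
  apply MV.
  - intros t Ht. unfold F, dF. eapply dC_ext_val. apply dC_minus. apply dC_minus.
    + apply dC_comp with (f := Catan) (g := fun y => (1 + y)%C).
      apply dC_Catan. apply disk_dom. apply Hu2; auto.
      apply dC_plus. apply dC_const. apply dC_id.
    + apply dC_const.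
    + apply dSS.
    + ring.
  - intros t Ht. set (u := (RtoC t * w)%C). specialize (Hu t Ht). fold u in Hu.
    destruct (term_bound sg u rr N Cmod_sg Hu Hrr) as [N1 _].
    destruct (term_bound sgb u rr N Cmod_sgb Hu Hrr) as [N2 _].
    assert (N3 := nz_sq _ (disk_dom u (Hu2 t Ht))).
    replace (dF u) with (Hd N u). apply Hd_bound; auto.
    unfold dF, Hd. rewrite Catan_d_sg, DS_closed by auto. field. auto.
Qed.

Lemma bernoulli2 (h : R) (N : nat) : 0 <= h ->
  1 + INR N * h + INR N * (INR N - 1) / 2 * h ^ 2 <= (1 + h) ^ N.
Proof.
  intros Hh. induction N as [|N IH].
  - simpl. lra.
  - rewrite S_INR. simpl pow.
    assert (HN : 0 <= INR N * (INR N - 1)).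
    { destruct N. simpl. lra. rewrite S_INR. pose proof (pos_INR N). nra. }
    assert (0 <= INR N * (INR N - 1) / 2 * h ^ 3).
    { apply Rmult_le_pos. lra. apply pow_le. lra. }
    apply Rle_trans with ((1 + h) * (1 + INR N * h + INR N * (INR N - 1) / 2 * h ^ 2)).
    + simpl in *. nra.
    + apply Rmult_le_compat_l; lra.
Qed.

Lemma lim_nq (q : R) : 0 <= q < 1 -> forall eps, 0 < eps ->
  exists N0, forall N, (N0 <= N)%nat -> (INR N + 1) * q ^ N < eps.
Proof.
  intros Hq eps He.
  destruct (Req_dec q 0) as [->|Hq0].
  { exists 1%nat. intros N HN. destruct N; [lia|]. simpl. lra. }
  set (h := / q - 1).
  assert (Hh : 0 < h). { unfold h. assert (1 < / q). { rewrite <- Rinv_1. apply Rinv_lt_contravar; lra. } lra. }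
  assert (Eq : q = / (1 + h)). { unfold h. replace (1 + (/ q - 1)) with (/ q) by ring. rewrite Rinv_inv. auto. }
  destruct (INR_archimed (eps * h ^ 2) 8) as [N1 HN1].
  { apply Rmult_lt_0_compat; auto. apply pow_lt; auto. }
  exists (N1 + 2)%nat. intros N HN.
  assert (HN2 : 2 <= INR N) by (replace 2 with (INR 2) by (simpl; ring); apply le_INR; lia).
  assert (HN3 : INR N1 <= INR N) by (apply le_INR; lia).
  pose proof (bernoulli2 h N (Rlt_le _ _ Hh)) as B.
  set (X := (1 + h) ^ N) in *.
  assert (Hh2 : 0 < h ^ 2) by (apply pow_lt; auto).
  assert (BX : INR N * INR N / 4 * h ^ 2 <= X).
  { assert (INR N * INR N / 4 <= INR N * (INR N - 1) / 2) by nra.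
    assert (INR N * INR N / 4 * h ^ 2 <= INR N * (INR N - 1) / 2 * h ^ 2) by (apply Rmult_le_compat_r; lra).
    assert (0 <= INR N * h) by nra. lra. }
  assert (HX : 0 < X) by (unfold X; apply pow_lt; lra).
  rewrite Eq, pow_inv. fold X.
  apply (Rmult_lt_reg_r X); auto. rewrite Rmult_assoc, Rinv_l, Rmult_1_r by lra.
  assert (HA : 8 < INR N * (eps * h ^ 2)).
  { apply Rlt_le_trans with (INR N1 * (eps * h ^ 2)). lra.
    apply Rmult_le_compat_r; auto. apply Rmult_le_pos; lra. }
  assert (eps * (INR N * INR N / 4 * h ^ 2) <= eps * X) by (apply Rmult_le_compat_l; lra).
  assert (eps * (INR N * INR N / 4 * h ^ 2) = INR N / 4 * (INR N * (eps * h ^ 2))) by (unfold Rdiv; ring).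
  assert (INR N / 4 * 8 < INR N / 4 * (INR N * (eps * h ^ 2))) by (apply Rmult_lt_compat_l; lra).
  lra.
Qed.

Lemma is_series_C_eps (a : nat -> C) (l : C) :
  (forall eps, 0 < eps -> exists N0, forall N, (N0 <= N)%nat ->
     Cmod (@sum_n C_AbelianMonoid a N - l)%C < eps) ->
  @is_series C_AbsRing C_NormedModule a l.
Proof.
  intros H P [eps HP]. destruct (H eps (cond_pos eps)) as [N0 HN].
  exists N0. intros N HN0. apply HP. apply C_NormedModule_mixin_compat1. exact (HN N HN0).
Qed.

Lemma lim_geom_bound (a : nat -> C) (l : C) (K q : R) : 0 <= q < 1 ->
  (forall N, Cmod (@sum_n C_AbelianMonoid a N - l)%C <= K * ((INR N + 1) * q ^ N)) ->
  @is_series C_AbsRing C_NormedModule a l.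
Proof.
  intros Hq HB. apply is_series_C_eps. intros eps He.
  destruct (lim_nq q Hq (eps / (Rabs K + 1))) as [N0 HN].
  apply Rdiv_lt_0_compat; [lra| pose proof (Rabs_pos K); lra].
  exists N0. intros N HN0. specialize (HN N HN0). eapply Rle_lt_trans. apply HB.
  assert (0 <= (INR N + 1) * q ^ N) by (apply Rmult_le_pos; [pose proof (pos_INR N); lra | apply pow_le; lra]).
  apply Rle_lt_trans with (Rabs K * ((INR N + 1) * q ^ N)).
  apply Rmult_le_compat_r; auto. apply Rle_abs.
  apply Rle_lt_trans with ((Rabs K + 1) * ((INR N + 1) * q ^ N)). 
  apply Rmult_le_compat_r; auto. lra.
  apply (Rmult_lt_reg_r (/ (Rabs K + 1))). apply Rinv_0_lt_compat; pose proof (Rabs_pos K); lra.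
  replace ((Rabs K + 1) * ((INR N + 1) * q ^ N) * / (Rabs K + 1)) with ((INR N + 1) * q ^ N)
    by (field; pose proof (Rabs_pos K); lra).
  exact HN.
Qed.

Definition dd (n : nat) : R := (-1) ^ n * (PI / 4 + T n).

Lemma Cpow_RtoC (x : R) n : Cpow (RtoC x) n = RtoC (x ^ n).
Proof. induction n as [|n IH]; simpl. reflexivity. rewrite IH, RtoC_mult. reflexivity. Qed.

Lemma summand_eq (w : C) (n : nat) :
  (((-1) ^ n * (PI / 4 + T n)) * Cpow w n)%C = (RtoC (dd n) * Cpow w n)%C.
Proof.
  f_equal. rewrite Cpow_RtoC. unfold dd. apply injective_projections; simpl; field.
Qed.

Lemma m1sq (n : nat) : (-1) ^ n * (-1) ^ n = 1.
Proof. induction n as [|n IH]; simpl. ring. transitivity ((-1) ^ n * (-1) ^ n). ring. exact IH. Qed.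

Lemma dd_step (N : nat) : dd N + dd (S N) = acoef (S N).
Proof.
  unfold dd. pose proof (T_step N) as HT. pose proof (m1sq N) as Hm.
  replace (T (S N)) with (T N + (-1) ^ S N * acoef (S N)) by lra.
  simpl pow. replace (acoef (S N)) with (acoef (S N) * ((-1) ^ N * (-1) ^ N)) at 2 by (rewrite Hm; ring).
  ring.
Qed.

Lemma psum_id (w : C) (N : nat) :
  ((1 + w) * @sum_n C_AbelianMonoid (fun n => RtoC (dd n) * Cpow w n)%C N)%C =
  (RtoC (PI / 4) + SS N w + RtoC (dd N) * Cpow w (S N))%C.
Proof.
  induction N as [|N IH].
  - rewrite sumC_O. cbn [SS Cpow]. unfold dd. simpl pow. 
    replace (T 0) with 0 by reflexivity. apply injective_projections; simpl; ring.
  - rewrite sumC_S. 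
    transitivity ((1 + w) * @sum_n C_AbelianMonoid (fun n => RtoC (dd n) * Cpow w n)%C N
      + (1 + w) * (RtoC (dd (S N)) * Cpow w (S N)))%C. ring.
    rewrite IH. cbn [SS]. rewrite <- dd_step, RtoC_plus. rewrite !Cpow_S. ring.
Qed.

Lemma SSm1 (N : nat) : SS N (RtoC (-1)) = RtoC (T N).
Proof.
  induction N as [|N IH].
  - reflexivity.
  - cbn [SS]. rewrite IH, Cpow_RtoC, <- RtoC_mult, <- RtoC_plus. f_equal.
    pose proof (T_step N). lra.
Qed.

Lemma Catan_0 : Catan (RtoC 0) = RtoC 0.
Proof.
  unfold Catan. replace (1 - Ci * RtoC 0)%C with (RtoC 1) by ring.
  replace (1 + Ci * RtoC 0)%C with (RtoC 1) by ring. ring.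
Qed.

Lemma one_lt_sqrt2 : 1 < sqrt 2.
Proof. pose proof sqrt2_pos. pose proof sqrt2_sq. nra. Qed.

Lemma r0_lt1 : r0 < 1.
Proof. unfold r0. rewrite <- Rinv_1. apply Rinv_lt_contravar. pose proof sqrt2_pos; lra. apply one_lt_sqrt2. Qed.

Lemma TN_bound (N : nat) : Rabs (PI / 4 + T N) <= 2 * r0 / (1 - r0) * r0 ^ N.
Proof.
  assert (Hc : Cmod (RtoC (-1)) = 1) by (rewrite Cmod_R, Rabs_left by lra; ring).
  pose proof (main_est (RtoC (-1)) N) as M. rewrite Hc in M.
  specialize (M ltac:(apply one_lt_sqrt2)).
  replace (1 + RtoC (-1))%C with (RtoC 0) in M by (apply injective_projections; simpl; ring).
  rewrite Catan_0, SSm1 in M.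
  replace (RtoC 0 - RtoC (PI / 4) - RtoC (T N))%C with (RtoC (- (PI / 4 + T N))) in M
    by (apply injective_projections; simpl; ring).
  rewrite Cmod_R, Rabs_Ropp in M. rewrite !Rmult_1_r in M.
  eapply Rle_trans. exact M. right. pose proof r0_lt1. field. lra.
Qed.

Lemma psum0 (N : nat) :
  @sum_n C_AbelianMonoid (fun n => RtoC (dd n) * Cpow (RtoC (-1)) n)%C N =
  (DS N (RtoC (-1)) + RtoC ((INR N + 1) * (PI / 4 + T N)))%C :> C.
Proof.
  induction N as [|N IH].
  - rewrite sumC_O. cbn [DS Cpow]. unfold dd. replace (T 0) with 0 by reflexivity. simpl INR.
    apply injective_projections; simpl; ring.
  - rewrite sumC_S, IH. cbn [DS]. rewrite !Cpow_RtoC, <- !RtoC_mult.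
    transitivity (DS N (RtoC (-1)) + RtoC ((INR N + 1) * (PI / 4 + T N) + dd (S N) * (-1) ^ S N))%C.
    { rewrite RtoC_plus. ring. }
    transitivity (DS N (RtoC (-1)) + RtoC (sk (S N) * sin (th (S N)) * (-1) ^ N + (INR (S N) + 1) * (PI / 4 + T (S N))))%C.
    2: { rewrite RtoC_plus. ring. }
    f_equal. f_equal. unfold dd. rewrite T_S. unfold acoef, sk, th.
    set (S0 := sin (3 * INR (S N) * PI / 4)).
    pose proof (m1sq N) as Hm. rewrite S_INR. simpl pow.
    assert (INR N + 1 <> 0) by (pose proof (pos_INR N); lra).
    assert (Rpower 2 ((INR N + 1) / 2) <> 0) by (apply Rgt_not_eq, Rpower_pos2).
    idtac.
    transitivity ((INR N + 1) * (PI / 4 + T N) + (PI / 4 + T N) * ((-1) ^ N * (-1) ^ N) -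
       ((-1) ^ N * (-1) ^ N) * (-1) ^ N * (/ Rpower 2 ((INR N + 1) / 2) * S0 / (INR N + 1))).
    field. auto.
    rewrite Hm. field. auto.
Qed.

Lemma Hd_eq (N : nat) (u : C) : Cmod u < sqrt 2 ->
  (/ (1 + (1 + u) * (1 + u)) - DS N u)%C = Hd N u.
Proof.
  intros Hu.
  assert (Hrr : r0 * Cmod u < 1).
  { unfold r0. pose proof sqrt2_pos. apply (Rmult_lt_reg_l (sqrt 2)); auto.
    rewrite <- Rmult_assoc, Rinv_r by lra. lra. }
  destruct (term_bound sg u (Cmod u) N Cmod_sg (Rle_refl _) Hrr) as [N1 _].
  destruct (term_bound sgb u (Cmod u) N Cmod_sgb (Rle_refl _) Hrr) as [N2 _].
  assert (N3 := nz_sq _ (disk_dom u Hu)).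
  unfold Hd. rewrite Catan_d_sg, DS_closed by auto. field. auto.
Qed.

Definition K1 : R := 2 * r0 / (1 - r0).

Lemma K1_pos : 0 < K1.
Proof. unfold K1. pose proof r0_pos. pose proof r0_lt1. apply Rdiv_lt_0_compat; lra. Qed.

Lemma part2 : forall z : C, Cmod (z - 1) < sqrt 2 ->
     is_series (fun n : nat =>
       ((-1) ^ n * (PI / 4 + T n)) * Cpow (z - 1) n)%C (atan_over z).
Proof.
  intros z Hz.
  apply is_series_ext with (a := fun n => (RtoC (dd n) * Cpow (z - 1) n)%C).
  { intros n. symmetry. apply summand_eq. }
  pose proof r0_pos as Hr0. pose proof r0_lt1 as Hr01. pose proof K1_pos as HK1.
  unfold atan_over. destruct (Ceq_dec z 0) as [Ez|Nz].
  - subst z. replace (RtoC 0 - 1)%C with (RtoC (-1)) by (apply injective_projections; simpl; ring).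
    apply lim_geom_bound with (K := r0 / (1 - r0) + K1) (q := r0). lra.
    intros N. rewrite psum0.
    assert (Hm1 : Cmod (RtoC (-1)) < sqrt 2) by (rewrite Cmod_R, Rabs_left by lra; pose proof one_lt_sqrt2; lra).
    assert (E1 : (DS N (RtoC (-1)) + RtoC ((INR N + 1) * (PI / 4 + T N)) - 1)%C =
                 (- Hd N (RtoC (-1)) + RtoC ((INR N + 1) * (PI / 4 + T N)))%C).
    { rewrite <- Hd_eq by auto.
      replace (1 + RtoC (-1))%C with (RtoC 0) by (apply injective_projections; simpl; ring).
      replace (/ (1 + RtoC 0 * RtoC 0))%C with (RtoC 1). ring.
      apply injective_projections; simpl; field. }
    rewrite E1. eapply Rle_trans. apply Cmod_triangle. rewrite Cmod_opp, Cmod_R.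
    assert (B1 : Cmod (Hd N (RtoC (-1))) <= r0 * (r0 * 1) ^ N / (1 - r0 * 1)).
    { apply Hd_bound. rewrite Cmod_R, Rabs_left by lra. lra. lra. }
    rewrite !Rmult_1_r in B1.
    assert (B2 : Rabs ((INR N + 1) * (PI / 4 + T N)) <= (INR N + 1) * (K1 * r0 ^ N)).
    { rewrite Rabs_mult, (Rabs_right (INR N + 1)) by (pose proof (pos_INR N); lra).
      apply Rmult_le_compat_l. pose proof (pos_INR N); lra. apply TN_bound. }
    assert (0 < r0 ^ N) by (apply pow_lt; lra).
    assert (r0 * r0 ^ N / (1 - r0) = r0 / (1 - r0) * r0 ^ N) by (field; lra).
    assert (0 < r0 / (1 - r0)) by (apply Rdiv_lt_0_compat; lra).
    assert (r0 / (1 - r0) * r0 ^ N <= r0 / (1 - r0) * ((INR N + 1) * r0 ^ N)).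
    { apply Rmult_le_compat_l. lra. pose proof (pos_INR N). nra. }
    nra.
  - set (w := (z - 1)%C) in *. set (rr := Cmod w) in *. set (q := r0 * rr).
    assert (Hq : q < 1).
    { unfold q, r0. pose proof sqrt2_pos. apply (Rmult_lt_reg_l (sqrt 2)); auto.
      rewrite <- Rmult_assoc, Rinv_r by lra. lra. }
    assert (Hrr : 0 <= rr) by apply Cmod_ge_0.
    assert (Hq0 : 0 <= q) by (unfold q; nra).
    assert (Hzm : 0 < Cmod z) by (apply Cmod_gt_0; auto).
    apply lim_geom_bound with (K := (2 * r0 * rr / (1 - q) + K1 * rr) / Cmod z) (q := q). lra.
    intros N.
    assert (Ez : z = (1 + w)%C) by (unfold w; ring).
    pose proof (psum_id w N) as PS. rewrite <- Ez in PS.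
    assert (E : (@sum_n C_AbelianMonoid (fun n => RtoC (dd n) * Cpow w n)%C N - Catan z / z)%C =
                ((RtoC (dd N) * Cpow w (S N) - (Catan (1 + w) - RtoC (PI / 4) - SS N w)) / z)%C).
    { rewrite <- Ez. revert PS.
      generalize (@sum_n C_AbelianMonoid (fun n => (RtoC (dd n) * Cpow w n)%C) N). intros Sm PS.
      change C in Sm.
      assert (ES : Sm = ((RtoC (PI / 4) + SS N w + RtoC (dd N) * Cpow w (S N)) / z)%C).
      { rewrite <- PS. field. auto. }
      rewrite ES. field. auto. }
    rewrite E, Cmod_div by auto.
    assert (M := main_est w N Hz). fold rr q in M.
    assert (Bd : Cmod (RtoC (dd N) * Cpow w (S N))%C <= K1 * q ^ N * rr).
    { rewrite Cmod_mult, Cmod_R, Cmod_pow. fold rr. unfold dd. rewrite Rabs_mult, pow_1_abs, Rmult_1_l.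
      unfold q. rewrite Rpow_mult_distr. simpl pow.
      assert (Rabs (PI / 4 + T N) <= K1 * r0 ^ N) by apply TN_bound.
      assert (0 <= rr ^ N) by (apply pow_le; lra).
      assert (Rabs (PI / 4 + T N) * (rr * rr ^ N) <= K1 * r0 ^ N * (rr * rr ^ N)).
      { apply Rmult_le_compat_r. nra. auto. }
      nra. }
    assert (Tri : Cmod (RtoC (dd N) * Cpow w (S N) - (Catan (1 + w) - RtoC (PI / 4) - SS N w))%C <=
       Cmod (RtoC (dd N) * Cpow w (S N))%C + Cmod (Catan (1 + w) - RtoC (PI / 4) - SS N w)%C).
    { unfold Cminus at 1. eapply Rle_trans. apply Cmod_triangle. rewrite Cmod_opp. lra. }
    apply Rle_trans with (((2 * r0 * rr / (1 - q) + K1 * rr) * ((INR N + 1) * q ^ N)) / Cmod z).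
    2: { right. field. lra. }
    apply Rmult_le_compat_r. left; apply Rinv_0_lt_compat; auto.
    assert (0 <= q ^ N) by (apply pow_le; lra).
    assert (q ^ N <= (INR N + 1) * q ^ N) by (pose proof (pos_INR N); nra).
    assert (2 * (r0 * q ^ N / (1 - q) * rr) = 2 * r0 * rr / (1 - q) * q ^ N) by (field; lra).
    assert (0 <= 2 * r0 * rr / (1 - q) + K1 * rr).
    { assert (0 <= 2 * r0 * rr / (1 - q)) by (apply Rdiv_le_0_compat; nra). nra. }
    assert ((2 * r0 * rr / (1 - q) + K1 * rr) * q ^ N <= (2 * r0 * rr / (1 - q) + K1 * rr) * ((INR N + 1) * q ^ N))
      by (apply Rmult_le_compat_l; auto).
    nra.
Qed.


Theorem theorem3p1 :
  (forall (n : nat) (z : C), (1 <= n)%nat -> atan_dom z -> z <> 0%C ->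
     is_nth_cderive atan_dom Catan n z
       (INR (Factorial.fact (n - 1)) / Cpow (2 * z) (n - 1) *
        sum_n (fun k : nat =>
          (-1) ^ k * INR (binom k (n - k - 1)) * Cpow (2 * z) (2 * k)
            / Cpow (1 + z * z) (k + 1)) (n - 1))%C)
  /\
  (forall z : C, Cmod (z - 1) < sqrt 2 ->
     is_series (fun n : nat =>
       ((-1) ^ n * (PI / 4 + T n)) * Cpow (z - 1) n)%C (atan_over z)).
Proof.
  split.
  - exact part1.
  - exact part2.
Qed.
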